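(* There exists $\alpha\in(0,1)$ such that $\tilde\zeta(\upsilon)<\alpha<1$ for all $\upsilon\in(0,1)$, where $\tilde\zeta(\upsilon):=\sup_{j\ge1}\zeta_1(\upsilon^j)$.
   Context: The function $\zeta_1$ on $(0,1)$ is $\zeta_1(\upsilon)=\frac{1}{8\log^3\upsilon}\big(9-12\upsilon^2+3\upsilon^4+4\log\upsilon(3+\log^2\upsilon)+\sqrt{R(\upsilon)}\big)$, with $R(\upsilon)=225-504\upsilon^2+342\upsilon^4-72\upsilon^6+9\upsilon^8+(360-288\upsilon^2-72\upsilon^4)\log\upsilon+144\log^2\upsilon+(-120+96\upsilon^2+24\upsilon^4)\log^3\upsilon-96\log^4\upsilon+16\log^6\upsilon$. *)

(* Defs.v *)
From Stdlib Require Import Reals.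
From Coquelicot Require Import Coquelicot.
Open Scope R_scope.

Definition Rpoly (u : R) : R :=
  225 - 504 * u^2 + 342 * u^4 - 72 * u^6 + 9 * u^8
  + (360 - 288 * u^2 - 72 * u^4) * ln u
  + 144 * (ln u)^2
  + (-120 + 96 * u^2 + 24 * u^4) * (ln u)^3
  - 96 * (ln u)^4
  + 16 * (ln u)^6.

Definition zeta1 (u : R) : R :=
  / (8 * (ln u)^3) *
  (9 - 12 * u^2 + 3 * u^4 + 4 * ln u * (3 + (ln u)^2) + sqrt (Rpoly u)).

Definition zeta_tilde (u : R) : Rbar :=
  Sup_seq (fun n : nat => zeta1 (u ^ (S n))).

(* Main.v *)
Require Import Defs.
From Stdlib Require Import Reals Lra Lia.
From Coquelicot Require Import Coquelicot.
Open Scope R_scope.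

Lemma Dn_exp n t : Derive_n exp n t = exp t.
Proof. apply is_derive_n_unique, is_derive_n_exp. Qed.

Lemma exp_ge_P6 y : 0 <= y ->
  1 + y + y^2/2 + y^3/6 + y^4/24 + y^5/120 + y^6/720 <= exp y.
Proof.
  intros Hy. destruct (Req_dec y 0) as [->|Hy0].
  { rewrite exp_0; simpl; lra. }
  destruct (Taylor_Lagrange exp 6 0 y) as [z [Hz E]].
  - lra.
  - intros t _ k _. destruct k as [|k]; simpl; [exact I|].
    apply ex_derive_ext with exp.
    + intros s; now rewrite Dn_exp.
    + eexists; apply is_derive_exp.
  - rewrite E. cbn [sum_f_R0]. rewrite !Dn_exp, exp_0.
    assert (0 < exp z) by apply exp_pos.
    assert (0 <= (y - 0) ^ 7 / INR (Factorial.fact 7) * exp z).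
    { apply Rmult_le_pos; [|lra]. apply Rmult_le_pos.
      apply pow_le; lra. left; apply Rinv_0_lt_compat, lt_0_INR, Factorial.lt_O_fact. }
    simpl Factorial.fact in *. rewrite !INR_IZR_INZ in *. simpl Z.of_nat in *.
    rewrite !Rminus_0_r in *. simpl pow. lra.
Qed.

Lemma g_neg x : 0 < x -> 9/4*x^2 - 24/5*x^3 + 9*x - 9 <= 0.
Proof.
intros x0. destruct (Rle_dec x 1).
- assert (H: 0 <= (x - 9/10)*(x - 9/10)*(x+18/10)) by (apply Rmult_le_pos; [apply Rle_0_sqr|lra]).
  nra.
- assert (H: 0 <= (x - 30/17)*(x - 30/17)) by apply Rle_0_sqr. nra.
Qed.

Lemma q1_neg x : 0 < x -> -9 + 9*x - 24/5*x^3 + 12/5*x^4 - 16/25*x^6 <= 0.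
Proof.
  intros Hx. assert (H := g_neg x Hx).
  assert (H2: 0 <= (4/5*x^3 - 3/2*x)*(4/5*x^3 - 3/2*x)) by apply Rle_0_sqr.
  assert (Eq1: -9 + 9*x - 24/5*x^3 + 12/5*x^4 - 16/25*x^6 =
     - ((4/5*x^3 - 3/2*x)*(4/5*x^3 - 3/2*x)) + (9/4*x^2 - 24/5*x^3 + 9*x - 9)) by field.
  lra.
Qed.

Lemma Gp_neg x : 0 < x ->
  (-18)*x^1 + (24/5)*x^3 + (-12/5)*x^4 + (-12/5)*x^5 + (-32/25)*x^6 + (-24/25)*x^7 + (-48/25)*x^8 + (-32/25)*x^9 + (-32/75)*x^10 + (-128/375)*x^11 + (-128/1125)*x^12 <= 0.
Proof.
  intros Hx.
  assert (H0: 0 <= (x - 4/3)*(x - 4/3)*(x + 2/3)) by (apply Rmult_le_pos; [apply Rle_0_sqr|lra]).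
  assert (H: 0 <= 18 - 24/5*x^2 + 12/5*x^3) by nra.
  assert (0 <= x^5) by (apply pow_le; lra).
  assert (0 <= x^6) by (apply pow_le; lra).
  assert (0 <= x^7) by (apply pow_le; lra).
  assert (0 <= x^8) by (apply pow_le; lra).
  assert (0 <= x^9) by (apply pow_le; lra).
  assert (0 <= x^10) by (apply pow_le; lra).
  assert (0 <= x^11) by (apply pow_le; lra).
  assert (0 <= x^12) by (apply pow_le; lra).
  assert (0 <= x * (18 - 24/5*x^2 + 12/5*x^3)) by (apply Rmult_le_pos; lra).
  assert (E: (-18)*x^1 + (24/5)*x^3 + (-12/5)*x^4 = - (x * (18 - 24/5*x^2 + 12/5*x^3))) by field.
  lra.
Qed.

Lemma G0_neg x : 0 < x ->
  (-56/25)*x^6 + (-104/25)*x^7 + (-116/25)*x^8 + (-388/75)*x^9 + (-368/75)*x^10 + (-1408/375)*x^11 + (-2816/1125)*x^12 + (-1648/1125)*x^13 + (-832/1125)*x^14 + (-1024/3375)*x^15 + (-64/625)*x^16 + (-512/16875)*x^17 + (-256/50625)*x^18 <= 0.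
Proof.
  intros Hx.
  assert (0 <= x^6) by (apply pow_le; lra).
  assert (0 <= x^7) by (apply pow_le; lra).
  assert (0 <= x^8) by (apply pow_le; lra).
  assert (0 <= x^9) by (apply pow_le; lra).
  assert (0 <= x^10) by (apply pow_le; lra).
  assert (0 <= x^11) by (apply pow_le; lra).
  assert (0 <= x^12) by (apply pow_le; lra).
  assert (0 <= x^13) by (apply pow_le; lra).
  assert (0 <= x^14) by (apply pow_le; lra).
  assert (0 <= x^15) by (apply pow_le; lra).
  assert (0 <= x^16) by (apply pow_le; lra).
  assert (0 <= x^17) by (apply pow_le; lra).
  assert (0 <= x^18) by (apply pow_le; lra).
  lra.
Qed.

Lemma G_neg x Z : 0 < x ->
  1 + (2*x) + (2*x)^2/2 + (2*x)^3/6 + (2*x)^4/24 + (2*x)^5/120 + (2*x)^6/720 <= Z ->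
  (12/5*x^3 - 9 - 9*x) + (18 + 12/5*x^3) * Z
  + (-9 + 9*x - 24/5*x^3 + 12/5*x^4 - 16/25*x^6) * Z^2 <= 0.
Proof.
  intros Hx HZ.
  set (Z0 := 1 + (2*x) + (2*x)^2/2 + (2*x)^3/6 + (2*x)^4/24 + (2*x)^5/120 + (2*x)^6/720) in *.
  set (q1 := -9 + 9*x - 24/5*x^3 + 12/5*x^4 - 16/25*x^6).
  assert (Hq1 : q1 <= 0) by (apply q1_neg; auto).
  assert (HG0 := G0_neg x Hx). assert (HGp := Gp_neg x Hx).
  assert (E0 : (12/5*x^3 - 9 - 9*x) + (18 + 12/5*x^3) * Z0 + q1 * Z0^2 =
   (-56/25)*x^6 + (-104/25)*x^7 + (-116/25)*x^8 + (-388/75)*x^9 + (-368/75)*x^10 + (-1408/375)*x^11 + (-2816/1125)*x^12 + (-1648/1125)*x^13 + (-832/1125)*x^14 + (-1024/3375)*x^15 + (-64/625)*x^16 + (-512/16875)*x^17 + (-256/50625)*x^18)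
   by (unfold Z0, q1; field).
  assert (E1 : (18 + 12/5*x^3) + 2 * q1 * Z0 =
   (-18)*x^1 + (24/5)*x^3 + (-12/5)*x^4 + (-12/5)*x^5 + (-32/25)*x^6 + (-24/25)*x^7 + (-48/25)*x^8 + (-32/25)*x^9 + (-32/75)*x^10 + (-128/375)*x^11 + (-128/1125)*x^12)
   by (unfold Z0, q1; field).
  assert (E : (12/5*x^3 - 9 - 9*x) + (18 + 12/5*x^3) * Z + q1 * Z^2 =
    ((12/5*x^3 - 9 - 9*x) + (18 + 12/5*x^3) * Z0 + q1 * Z0^2)
    + ((18 + 12/5*x^3) + 2 * q1 * Z0) * (Z - Z0) + q1 * (Z - Z0)^2) by field.
  fold q1. rewrite E, E0, E1.
  assert (0 <= (Z - Z0)^2) by nra.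
  assert (q1 * (Z - Z0)^2 <= 0) by nra.
  assert (((-18)*x^1 + (24/5)*x^3 + (-12/5)*x^4 + (-12/5)*x^5 + (-32/25)*x^6 + (-24/25)*x^7 + (-48/25)*x^8 + (-32/25)*x^9 + (-32/75)*x^10 + (-128/375)*x^11 + (-128/1125)*x^12) * (Z - Z0) <= 0) by nra.
  lra.
Qed.

Lemma key v : 0 < v < 1 -> zeta1 v <= 4/5.
Proof.
  intros [h0 h1].
  assert (HL: ln v < 0) by (rewrite <- ln_1; apply ln_increasing; lra).
  set (x := - ln v). assert (Hx: 0 < x) by (unfold x; lra).
  assert (Hlv: ln v = -x) by (unfold x; ring).
  set (Z := exp (2*x)).
  assert (HZpos : 0 < Z) by (unfold Z; apply exp_pos).
  assert (HZ: 1 + (2*x) + (2*x)^2/2 + (2*x)^3/6 + (2*x)^4/24 + (2*x)^5/120 + (2*x)^6/720 <= Z)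
    by (apply exp_ge_P6; lra).
  assert (Hv2: v^2 = / Z).
  { assert (v^2 * Z = 1).
    { rewrite <- (exp_ln v h0). rewrite Hlv. unfold Z. simpl pow. rewrite Rmult_1_r.
      rewrite <- !exp_plus. replace (-x + -x + 2*x) with 0 by ring. apply exp_0. }
    field_simplify_eq; [lra | lra]. }
  unfold zeta1, Rpoly. rewrite Hlv.
  replace (v^4) with ((v^2)^2) by ring.
  replace (v^6) with ((v^2)^3) by ring.
  replace (v^8) with ((v^2)^4) by ring.
  rewrite Hv2.
  set (A := 9 - 12 * / Z + 3 * (/ Z)^2 + 4 * (-x) * (3 + (-x)^2)).
  set (Rr := 225 - 504 * / Z + 342 * (/ Z) ^ 2 - 72 * (/ Z) ^ 3 + 9 * (/ Z) ^ 4 +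
     (360 - 288 * / Z - 72 * (/ Z) ^ 2) * - x + 144 * (- x) ^ 2 +
     (-120 + 96 * / Z + 24 * (/ Z) ^ 2) * (- x) ^ 3 - 96 * (- x) ^ 4 + 16 * (- x) ^ 6).
  set (D := 8 * (-x)^3).
  assert (HD : D < 0).
  { unfold D. assert (0 < x^3) by (apply pow_lt; lra).
    replace ((-x)^3) with (-(x^3)) by ring. lra. }
  set (T := 4/5 * D - A).
  assert (Hs : T <= sqrt Rr).
  { destruct (Rle_dec T 0) as [HT|HT].
    - pose proof (sqrt_pos Rr). lra.
    - rewrite <- (sqrt_pow2 T) by lra. apply sqrt_le_1_alt.
      assert (HG := G_neg x Z Hx HZ).
      assert (EG : Z^2 * (T^2 - Rr) = 16 * ((12/5*x^3 - 9 - 9*x) + (18 + 12/5*x^3) * Z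
        + (-9 + 9*x - 24/5*x^3 + 12/5*x^4 - 16/25*x^6) * Z^2)).
      { unfold T, D, A, Rr. field. lra. }
      assert (0 < Z^2) by (apply pow_lt; lra).
      assert (Z^2 * (T^2 - Rr) <= 0) by lra.
      assert (T^2 - Rr <= 0).
      { destruct (Rle_dec (T^2 - Rr) 0) as [h|h]; [exact h|].
        assert (0 < Z^2 * (T^2 - Rr)) by (apply Rmult_lt_0_compat; lra). lra. }
      lra. }
  assert (HiD : / D < 0) by (apply Rinv_lt_0_compat; lra).
  assert (E : / D * (A + sqrt Rr) = 4/5 + / D * (A + sqrt Rr - 4/5 * D)).
  { field. lra. }
  fold D. rewrite E.
  assert (0 <= A + sqrt Rr - 4/5 * D) by (unfold T in Hs; lra).
  assert (0 <= - / D * (A + sqrt Rr - 4/5 * D)) by (apply Rmult_le_pos; lra).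
  lra.
Qed.

Theorem lemma4p9 :
  exists alpha : R, 0 < alpha < 1 /\
    forall u : R, 0 < u < 1 -> Rbar_lt (zeta_tilde u) (Finite alpha).
Proof.
  exists (9/10). split; [lra|].
  intros u Hu.
  apply Rbar_le_lt_trans with (Finite (4/5)); [|simpl; lra].
  apply Rbar_not_lt_le. intros H.
  unfold zeta_tilde in H. apply Sup_seq_minor_lt in H.
  destruct H as [n Hn]. change (4/5 < zeta1 (u ^ S n)) in Hn.
  assert (Hk : zeta1 (u ^ S n) <= 4/5).
  { apply key. split.
    - apply pow_lt; lra.
    - apply pow_lt_1_compat; [lra | lia]. }
  lra.
Qed.
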